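(* Let $X$ be a real Banach space, $I=\{1,\ldots,m\}$, $J=\{1,\ldots,l\}$, $f_i,g_j\colon X\to\mathbb{R}$, $M=\{x\in X\mid f_i(x)=0\ \forall i\in I,\ g_j(x)\le0\ \forall j\in J\}$, $\overline{x}\in M$, and $J(\overline{x})=\{j\in J\mid g_j(\overline{x})=0\}$. Let the functions $f_i$, $i\in I$, and $g_j$, $j\in J(\overline{x})$, be quasidifferentiable at $\overline{x}$ with given quasidifferentials, and let $x_i^*\in\underline{\partial} f_i(\overline{x})$, $y_i^*\in\overline{\partial} f_i(\overline{x})$, $i\in I$, and $z_j^*\in\overline{\partial} g_j(\overline{x})$, $j\in J(\overline{x})$, be given. Put $C_i=(\underline{\partial} f_i(\overline{x})+y_i^* )\cup(-x_i^*-\overline{\partial} f_i(\overline{x}))$, $i\in I$. Then the following three conditions (1) for any $i\in I$ there exists $v_i\in X$ such that $s(\underline{\partial} f_i(\overline{x})+y_i^*,v_i)<0$ and for any $k\ne i$, $s(\underline{\partial} f_k(\overline{x})+y_k^*,v_i)\le 0$ and $s(-x_k^*-\overline{\partial} f_k(\overline{x}),v_i)\le0$; (2) for any $i\in I$ there exists $w_i\in X$ such that $s(-x_i^*-\overline{\partial} f_i(\overline{x}),w_i)<0$ and for any $k\ne i$, $s(-x_k^*-\overline{\partial} f_k(\overline{x}),w_i)\le0$ and $s(\underline{\partial} f_k(\overline{x})+y_k^*,w_i)\le0$; (3) there exists $v_0\in X$ with $s(\underline{\partial} g_j(\overline{x})+z_j^*,v_0)<0$ for all $j\in J(\overline{x})$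 and $s(\underline{\partial} f_i(\overline{x})+y_i^*,v_0)\le0$, $s(-x_i^*-\overline{\partial} f_i(\overline{x}),v_0)\le0$ for all $i\in I$; are all satisfied if and only if $$C_i\cap\operatorname{cl}^*\operatorname{cone}\{-C_k\mid k\ne i\}=\emptyset\quad\forall i\in I$$ and $$\operatorname{co}\{\underline{\partial} g_j(\overline{x})+z_j^*\mid j\in J(\overline{x})\}\cap\operatorname{cl}^*\operatorname{cone}\{-C_i\mid i\in I\}=\emptyset.$$
   Context: $X^*$ is the dual of $X$ with pairing $\langle\cdot,\cdot\rangle$; $\operatorname{cl}^*$ is closure in the weak$^*$ topology. A function $f$ is quasidifferentiable at $x$ if the directional derivative $f'(x,v)=\lim_{\alpha\to+0}(f(x+\alpha v)-f(x))/\alpha$ exists and is finite for all $v$ and there is a pair $[\underline{\partial} f(x),\overline{\partial} f(x)]$ of convex weak$^*$ compact subsets of $X^*$ with $f'(x,v)=\max_{x^*\in\underline{\partial} f(x)}\langle x^*,v\rangle+\min_{y^*\in\overline{\partial} f(x)}\langle y^*,v\rangle$ for all $v$; a specific such pair is fixed for each function. $s(C,v)=\sup_{x^*\in C}\langle x^*,v\rangle$. For $A$ a subset of a real vector space, $\operatorname{cone}A$ is the set of all finite combinations $\sum\lambda_ix_i$ with $x_i\in A$, $\lambda_i\ge0$; for a family of sets, $\operatorname{cone}\{A_k\}$ means the cone of their union; $\operatorname{co}$ denotes convex hull (of the union of the listed sets). *)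

(* Defs.v *)
From HB Require Import structures.
From mathcomp Require Import all_boot all_order all_algebra.
From mathcomp Require Import all_classical all_reals all_analysis.
Set Implicit Arguments. Unset Strict Implicit. Unset Printing Implicit Defensive.
Import Order.TTheory GRing.Theory Num.Theory.
Import numFieldNormedType.Exports.
Local Open Scope classical_set_scope.
Local Open Scope ring_scope.

Section QD.
Variables (R : realType) (X : normedModType R).

Definition in_dual (phi : X -> R) : Prop :=
  (forall (a : R) (x y : X), phi (a *: x + y) = a * phi x + phi y) /\
  continuous phi.

(* the weak^* topology on X^* is the subspace topology induced by the
   topology of pointwise convergence {ptws X -> R} *)
Definition wstar_closure (A : set (X -> R)) : set (X -> R) :=
  [set phi | in_dual phi /\ closure (A : set {ptws X -> R}) phi].

Definition wstar_compact (A : set (X -> R)) : Prop :=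
  A `<=` in_dual /\ compact (A : set {ptws X -> R}).

Definition convex_set (A : set (X -> R)) : Prop :=
  forall phi psi (t : R), 0 <= t <= 1 -> A phi -> A psi ->
    A (fun x => t * phi x + (1 - t) * psi x).

Definition supp (C : set (X -> R)) (v : X) : R := sup [set phi v | phi in C].

Definition shift_set (C : set (X -> R)) (y : X -> R) : set (X -> R) :=
  [set psi | exists2 phi, C phi & psi = (fun x => phi x + y x)].

Definition negshift_set (x0 : X -> R) (D : set (X -> R)) : set (X -> R) :=
  [set psi | exists2 phi, D phi & psi = (fun x => - x0 x - phi x)].

Definition opp_set (C : set (X -> R)) : set (X -> R) :=
  [set psi | C (fun x => - psi x)].

Definition cone (A : set (X -> R)) : set (X -> R) :=
  [set psi | exists (n : nat) (c : 'I_n -> R) (a : 'I_n -> X -> R),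
     [/\ forall k, 0 <= c k, forall k, A (a k) &
         psi = (fun x => \sum_(k < n) c k * a k x)]].

Definition co (A : set (X -> R)) : set (X -> R) :=
  [set psi | exists (n : nat) (c : 'I_n -> R) (a : 'I_n -> X -> R),
     [/\ forall k, 0 <= c k, \sum_(k < n) c k = 1, forall k, A (a k) &
         psi = (fun x => \sum_(k < n) c k * a k x)]].

Definition quasidiff (f : X -> R) (x : X) (Dl Du : set (X -> R)) : Prop :=
  [/\ Dl !=set0, Du !=set0, convex_set Dl /\ wstar_compact Dl,
      convex_set Du /\ wstar_compact Du &
      forall v : X,
        (fun a : R => (f (x + a *: v) - f x) / a) @ 0^'+ -->
          (sup [set phi v | phi in Dl] + inf [set psi v | psi in Du])].

End QD.

(* Main.v *)
Require Import Defs.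
From HB Require Import structures.
From mathcomp Require Import all_boot all_order all_algebra.
From mathcomp Require Import all_classical all_reals all_analysis.
From mathcomp Require Import ring lra.
Import Order.TTheory GRing.Theory Num.Theory.
Import numFieldNormedType.Exports.
Local Open Scope classical_set_scope.
Local Open Scope ring_scope.

Set Implicit Arguments. Unset Strict Implicit. Unset Printing Implicit Defensive.


Section Aux.
Variables (R : realType) (X : normedModType R).

Definition lin (phi : X -> R) := forall (a : R) (x y : X), phi (a *: x + y) = a * phi x + phi y.

Lemma lin0 phi : lin phi -> phi 0 = 0.
Proof. move=> h; have := h 1 0 0; rewrite scale1r addr0 mul1r => e; lra. Qed.

Lemma linN phi x : lin phi -> phi (- x) = - phi x.
Proof. move=> h; have := h (-1) x 0; rewrite addr0 scaleN1r (lin0 h) addr0 mulN1r //. Qed.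

Lemma lin_sum phi n (a : 'I_n -> R) (x : 'I_n -> X) : lin phi ->
  phi (\sum_(t < n) a t *: x t) = \sum_(t < n) a t * phi (x t).
Proof.
move=> h; elim: n a x => [|n IH] a x; first by rewrite !big_ord0 (lin0 h).
rewrite !big_ord_recr /= addrC h IH addrC //.
Qed.

Definition catf T n1 n2 (f1 : 'I_n1 -> T) (f2 : 'I_n2 -> T) : 'I_(n1 + n2) -> T :=
  fun k => match fintype.split k with inl i => f1 i | inr j => f2 j end.

Lemma catfl T n1 n2 (f1 : 'I_n1 -> T) (f2 : 'I_n2 -> T) i : catf f1 f2 (lshift n2 i) = f1 i.
Proof. by rewrite /catf (unsplitK (inl _ i)). Qed.
Lemma catfr T n1 n2 (f1 : 'I_n1 -> T) (f2 : 'I_n2 -> T) i : catf f1 f2 (rshift n1 i) = f2 i.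
Proof. by rewrite /catf (unsplitK (inr _ i)). Qed.
Lemma catfP T n1 n2 (f1 : 'I_n1 -> T) (f2 : 'I_n2 -> T) (P : T -> Prop) :
  (forall i, P (f1 i)) -> (forall i, P (f2 i)) -> forall k, P (catf f1 f2 k).
Proof. by move=> h1 h2 k; rewrite /catf; case: (fintype.split k). Qed.

Section Cone.
Variable A : set (X -> R).

Lemma cone0 : cone A (fun _ => 0).
Proof. by exists 0%N, (fun _ => 0), (fun _ _ => 0); split => [[]|[]|]//; apply/funext => x; rewrite big_ord0. Qed.

Lemma cone_sub f : A f -> cone A f.
Proof.
move=> Af; exists 1%N, (fun _ => 1), (fun _ => f); split => //.
by apply/funext => y; rewrite big_ord1 mul1r.
Qed.

Lemma cone_add f g : cone A f -> cone A g -> cone A (fun x => f x + g x).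
Proof.
move=> [n1 [c1 [a1 [c1p a1A ->]]]] [n2 [c2 [a2 [c2p a2A ->]]]].
exists (n1 + n2)%N, (catf c1 c2), (catf a1 a2); split.
- exact: (catfP (P := fun r => 0 <= r)).
- exact: (catfP (P := A)).
- apply/funext => x; rewrite big_split_ord /=; congr (_ + _); apply: eq_bigr => i _.
  + by rewrite !catfl.
  + by rewrite !catfr.
Qed.

Lemma cone_scale s f : 0 <= s -> cone A f -> cone A (fun x => s * f x).
Proof.
move=> s0 [n [c [a [cp aA ->]]]]; exists n, (fun k => s * c k), a; split => //.
  by move=> k; apply: mulr_ge0.
by apply/funext => x; rewrite mulr_sumr; apply: eq_bigr => k _; rewrite mulrA.
Qed.

Lemma cone_ge0 v chi : (forall psi, A psi -> 0 <= psi v) -> cone A chi -> 0 <= chi v.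
Proof.
move=> h [n [c [a [cp aA ->]]]]; apply: sumr_ge0 => k _; apply: mulr_ge0 => //; exact: h.
Qed.

Lemma cone_lin chi : (forall psi, A psi -> lin psi) -> cone A chi -> lin chi.
Proof.
move=> h [n [c [a [cp aA ->]]]] s x y.
rewrite mulr_sumr -big_split /=; apply: eq_bigr => k _; rewrite (h _ (aA k)); ring.
Qed.

End Cone.

End Aux.


Section Group.
Variables (R : realType) (X : normedModType R).

Lemma grouping l (K : 'I_l -> set (X -> R)) :
  (forall j, K j !=set0) -> (forall j, Defs.convex_set (K j)) ->
  forall n (c : 'I_n -> R) (a : 'I_n -> X -> R),
  (forall k, 0 <= c k) -> (forall k, exists j, K j (a k)) ->
  exists (nu : 'I_l -> R) (phi : 'I_l -> X -> R),
    [/\ forall j, 0 <= nu j, \sum_j nu j = \sum_k c k, forall j, K j (phi j) &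
        forall x, \sum_k c k * a k x = \sum_j nu j * phi j x].
Proof.
move=> Kn Kc; elim=> [|n IH] c a cp aK.
  have [phi Hphi] := choice (fun j => Kn j).
  exists (fun _ => 0), phi; split => //.
  - by rewrite big_ord0 big1.
  - by move=> x; rewrite big_ord0 big1 // => j _; rewrite mul0r.
have [nu [phi [nup nus phiK phis]]] := IH (fun k => c (widen_ord (leqnSn n) k))
   (fun k => a (widen_ord (leqnSn n) k)) (fun k => cp _) (fun k => aK _).
have [j1 aj1] := aK ord_max.
set cn := c ord_max; set an := a ord_max.
have cn0 : 0 <= cn by apply: cp.
have [pos|npos] := ltrP 0 (nu j1 + cn); last first.
  have nu0 : nu j1 = 0 by have := nup j1; lra.
  have cn00 : cn = 0 by have := nup j1; lra.
  exists nu, phi; split => //.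
  - by rewrite big_ord_recr /= nus -/cn cn00 addr0.
  - by move=> x; rewrite big_ord_recr /= phis -/cn cn00 mul0r addr0.
pose t := nu j1 / (nu j1 + cn).
have t0 : 0 <= t by apply: divr_ge0 => //; apply: ltW.
have t1 : t <= 1 by rewrite ler_pdivrMr // mul1r; lra.
pose nu' := fun j => nu j + (if j == j1 then cn else 0).
pose phi' := fun j => if j == j1 then (fun x => t * phi j1 x + (1 - t) * an x) else phi j.
exists nu', phi'; split.
- by move=> j; rewrite /nu'; case: ifP => _; [apply: addr_ge0|rewrite addr0].
- rewrite big_ord_recr /= -nus big_split /=; congr (_ + _).
  by rewrite -big_mkcond big_pred1_eq.
- move=> j; rewrite /phi'; case: ifP => [/eqP ->|_] //.
  have := Kc j1 (phi j1) an t; rewrite t0 t1 => /(_ isT (phiK j1) aj1); exact.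
- move=> x; rewrite big_ord_recr /= phis -/cn -/an.
  rewrite (bigD1 j1) //= [in RHS](bigD1 j1) //=.
  have -> : \sum_(j < l | j != j1) nu' j * phi' j x = \sum_(j < l | j != j1) nu j * phi j x.
    by apply: eq_bigr => j /negbTE jn; rewrite /nu' /phi' jn addr0.
  rewrite /nu' /phi' eqxx /t.
  have ne : nu j1 + cn != 0 by rewrite gt_eqF.

  by field.
Qed.

End Group.


Section HBsec.
Variables (R : realType).

Lemma HB_coord N (p : ('I_N -> R) -> R) :
  (forall z1 z2, p (fun t => z1 t + z2 t) <= p z1 + p z2) ->
  (forall s z, 0 < s -> s * p z <= p (fun t => s * z t)) ->
  0 <= p (fun _ => 0) ->
  exists a : 'I_N -> R, forall z, \sum_t a t * z t <= p z.
Proof.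
move=> padd phom p0.
suff H : forall k, (k <= N)%N -> exists a : 'I_N -> R,
    forall z, (forall t : 'I_N, (k <= t)%N -> z t = 0) -> \sum_t a t * z t <= p z.
  have [a Ha] := H N (leqnn N); exists a => z; apply: Ha => t.
  by rewrite leqNgt ltn_ord.
elim=> [_|k IH kN].
  exists (fun _ => 0) => z hz.
  have -> : z = (fun _ => 0) by apply/funext => t; exact: hz.
  by rewrite big1 // => t _; rewrite mul0r.
have [a Ha] := IH (ltnW kN).
pose kk : 'I_N := Ordinal kN.
pose e := fun t : 'I_N => if t == kk then 1 else 0 : R.
pose F := fun y : 'I_N -> R => \sum_t a t * y t.
pose sp := fun y : 'I_N -> R => forall t : 'I_N, (k <= t)%N -> y t = 0.
pose Sup := [set r | exists y, sp y /\ r = F y - p (fun t => y t - e t)].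
have Fadd y y' : F (fun t => y t + y' t) = F y + F y'.
  by rewrite /F -big_split; apply: eq_bigr => t _; rewrite mulrDr.
have Fsc y s : F (fun t => y t / s) = F y / s.
  by rewrite /F mulr_suml; apply: eq_bigr => t _; rewrite mulrA.
have spadd y y' : sp y -> sp y' -> sp (fun t => y t + y' t).
  by move=> h h' t kt; rewrite h // h' // addr0.
have spsc y s : sp y -> sp (fun t => y t / s).
  by move=> h t kt; rewrite h // mul0r.
have bnd y' : sp y' -> ubound Sup (p (fun t => y' t + e t) - F y').
  move=> hy' r [y [hy ->]].
  have h1 := Ha _ (spadd _ _ hy hy').
  have h2 := padd (fun t => y t - e t) (fun t => y' t + e t).
  have eqH : (fun t => y t - e t + (y' t + e t)) = (fun t => y t + y' t).
    by apply/funext => t; ring.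
  rewrite eqH in h2.
  move: h1; rewrite -/(F _) Fadd => h1; lra.
have sp0 : sp (fun _ => 0) by [].
have ne : Sup !=set0.
  by exists (F (fun _ => 0) - p (fun t => 0 - e t)); exists (fun _ => 0).
have hub : has_ubound Sup.
  by exists (p (fun t => 0 + e t) - F (fun _ => 0)); exact: bnd.
pose c := sup Sup.
have cge y : sp y -> F y - p (fun t => y t - e t) <= c.
  by move=> hy; apply: ub_le_sup => //; exists y.
have cle y : sp y -> c <= p (fun t => y t + e t) - F y.
  by move=> hy; apply: ge_sup => //; exact: bnd.
exists (fun t => if t == kk then c else a t) => z hz.
pose y := fun t => if t == kk then 0 else z t.
have hy : sp y.
  move=> t kt; rewrite /y; case: ifP => // /negbT tk; apply: hz.
  by rewrite ltn_neqAle kt andbT; apply: contra tk => /eqP h; apply/eqP/val_inj.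
have -> : \sum_t (if t == kk then c else a t) * z t = F y + c * z kk.
  rewrite /F (bigD1 kk) //= [in RHS](bigD1 kk) //= eqxx /y eqxx mulr0 add0r addrC.
  congr (_ + _); apply: eq_bigr => t /negbTE ->; done.
set s := z kk.
have pz : p z = p (fun t => y t + s * e t).
  congr (p _); apply/funext => t; rewrite /y /e /s; case: eqP => [->|_]; ring.
rewrite pz.
have [sneg|spos|s0] := ltrgtP s 0.
- have r0 : 0 < - s by rewrite oppr_gt0.
  have h1 := cge _ (spsc _ (- s) hy); rewrite Fsc in h1.
  have h2 := phom (- s) (fun t => y t / (- s) - e t) r0.
  have eqH : (fun t => - s * (y t / (- s) - e t)) = (fun t => y t + s * e t).
    apply/funext => t; field; rewrite lt_eqF //.
  rewrite eqH in h2.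
  set P := p (fun t => y t / (- s) - e t) in h1 h2.
  set q := F y / (- s) in h1.
  have Fq : F y = - s * q by rewrite /q; field; rewrite lt_eqF.
  rewrite Fq; nra.
- have h1 := cle _ (spsc _ s hy); rewrite Fsc in h1.
  have h2 := phom s (fun t => y t / s + e t) spos.
  have eqH : (fun t => s * (y t / s + e t)) = (fun t => y t + s * e t).
    by apply/funext => t; field; rewrite gt_eqF.
  rewrite eqH in h2.
  set P := p (fun t => y t / s + e t) in h1 h2.
  set q := F y / s in h1.
  have Fq : F y = s * q by rewrite /q; field; rewrite gt_eqF.
  rewrite Fq; nra.
- rewrite s0 mulr0 addr0.
  have -> : (fun t => y t + 0 * e t) = y by apply/funext => t; rewrite mul0r addr0.
  apply: Ha => t kt; exact: hy.
Qed.

End HBsec.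


Lemma ultra_fmap T U (f : T -> U) (F : set_system T) :
  UltraFilter F -> UltraFilter (f @ F).
Proof.
move=> FU; split; first exact: fmap_proper_filter.
move=> G GF sFG; apply/funext => A; apply/propext; split; last exact: sFG.
move=> GA; have [//|FnA] := in_ultra_setVsetC (f @^-1` A) FU.
have GnA : G (~` A) by apply: sFG.
by have /filter_ex [? []] : G (A `&` (~` A)) by exact: filterI.
Qed.

Section Topo.
Variables (R : realType) (X : normedModType R).

Lemma near_eval (f : {ptws X -> R}) (x : X) (e : R) : 0 < e ->
  \forall g \near f, `|f x - (g : X -> R) x| < e.
Proof.
move=> e0.
have H := (@pointwise_cvgP X R (nbhs f) f _).1 (@cvg_id _ (nbhs f)) x.
have H2 := H (nbhs_filter f).
have := @cvgrPdist_lt R R _ (nbhs f) _ (fun g : {ptws X -> R} => g x) (f x).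
move=> /(_ (nbhs_filter f)) [h _]; exact: h H2 e e0.
Qed.

Lemma eval_continuous (x : X) : continuous (fun g : {ptws X -> R} => g x).
Proof.
move=> f; have H := (@pointwise_cvgP X R (nbhs f) f _).1 (@cvg_id _ (nbhs f)) x.
exact: (H (nbhs_filter f)).
Qed.

Lemma closure_ge0 (A : set (X -> R)) (chi : X -> R) (v : X) :
  closure (A : set {ptws X -> R}) chi -> (forall psi, A psi -> 0 <= psi v) -> 0 <= chi v.
Proof.
move=> cl h; rewrite leNgt; apply/negP => neg.
have := near_eval (chi : {ptws X -> R}) v (e := - chi v) (ltac:(rewrite oppr_gt0; exact: neg)).
move=> /cl [psi [Apsi /= hpsi]].
have := h _ Apsi; move: hpsi; rewrite ltr_norml => /andP [h2 _]; lra.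
Qed.

Lemma compact_eval_bound (D : set (X -> R)) (v : X) :
  compact (D : set {ptws X -> R}) -> exists M, forall phi, D phi -> `|phi v| <= M.
Proof.
move=> cD.
have cI : compact [set (phi : {ptws X -> R}) v | phi in D].
  apply: (@continuous_compact {ptws X -> R} R (fun g => g v) D) => //.
  apply: continuous_subspaceT; exact: eval_continuous.
have := compact_bounded cI; case=> M [Mr HM].
exists (M + 1) => phi Dphi; apply: (HM (M + 1)); first lra.
by exists phi.
Qed.

End Topo.

Section Topo2.
Variables (R : realType) (X : normedModType R).

Lemma cvgR_lt T (F : set_system T) {FF : Filter F} (f : T -> R) (a : R) :
  f @ F --> a <-> (forall e, 0 < e -> \forall x \near F, `|a - f x| < e).
Proof. exact: (@cvgrPdist_lt R R T F FF f a). Qed.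

Lemma ptws_cvg_at T (F : set_system T) {FF : Filter F} (h : T -> X -> R) (p : X -> R) (t : X) :
  (fun i => (h i : {ptws X -> R})) @ F --> (p : {ptws X -> R}) -> (fun i => h i t) @ F --> p t.
Proof.
move=> H.
have := (@pointwise_cvgP X R ((fun i => (h i : {ptws X -> R})) @ F) p).
move=> /(_ (fmap_filter _ FF)) [+ _] => /(_ H t); exact.
Qed.

Lemma ptws_cvg_of T (F : set_system T) {FF : Filter F} (h : T -> X -> R) (p : X -> R) :
  (forall t, (fun i => h i t) @ F --> p t) ->
  (fun i => (h i : {ptws X -> R})) @ F --> (p : {ptws X -> R}).
Proof.
move=> H.
have := (@pointwise_cvgP X R ((fun i => (h i : {ptws X -> R})) @ F) p).
move=> /(_ (fmap_filter _ FF)) [_ +]; apply; exact: H.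
Qed.

Lemma cvg_sumR T (F : set_system T) {FF : Filter F} n (f : 'I_n -> T -> R) (a : 'I_n -> R) :
  (forall j, f j @ F --> a j) -> (fun x => \sum_j f j x) @ F --> \sum_j a j.
Proof. move=> h; apply: cvg_big => //; exact: add_continuous. Qed.

End Topo2.


Section StepA.
Variables (R : realType) (X : normedModType R).

Lemma term_le_sum N (G : nat -> R) (t : nat) : (t < N)%N -> (forall t, 0 <= G t) ->
  G t <= \sum_(s < N) G s.
Proof.
move=> tN h; rewrite (bigD1 (Ordinal tN)) //= lerDl; exact: sumr_ge0.
Qed.

Lemma abs_small (a : R) : (forall e, 0 < e -> `|a| < e) -> a = 0.
Proof.
move=> h; apply/eqP; apply: contraT => na.
by have := h `|a|; rewrite normr_gt0 na ltxx => /(_ isT).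
Qed.

Definition Itype := ((nat * (nat -> X)) * R)%type.
Definition refi (i k : Itype) := [/\ 0 < k.2, k.2 <= i.2 &
  forall t, (t < i.1.1)%N -> exists2 t', (t' < k.1.1)%N & k.1.2 t' = i.1.2 t].

Lemma refi_refl i : 0 < i.2 -> refi i i.
Proof. by move=> h; split => // t tN; exists t. Qed.

Lemma refi_trans a b c : refi a b -> refi b c -> refi a c.
Proof.
move=> [b0 ba hab] [c0 cb hbc]; split => //; first exact: le_trans cb ba.
move=> t /hab [t' t'b <-]; have [t'' t''c <-] := hbc _ t'b; by exists t''.
Qed.

Definition F0 := filter_from [set i : Itype | 0 < i.2] (fun i => [set k | refi i k]).

Lemma F0_proper : ProperFilter F0.
Proof.
apply: filter_from_proper; last by move=> i i0; exists i; exact: refi_refl.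
apply: filter_from_filter; first by exists ((0%N, fun _ => 0), 1) => /=.
move=> [[N1 x1] e1] [[N2 x2] e2] /= e10 e20.
pose xx := fun t => if (t < N1)%N then x1 t else x2 (t - N1)%N.
exists ((N1 + N2)%N, xx, Num.min e1 e2) => /=; first by rewrite lt_min e10 e20.
move=> k hk; split; apply: refi_trans hk; split => //=.
- by rewrite lt_min e10 e20.
- by rewrite ge_min lexx.
- move=> t tN; exists t; first by rewrite ltn_addr.
  by rewrite /xx tN.
- by rewrite lt_min e10 e20.
- by rewrite ge_min lexx orbT.
- move=> t tN; exists (N1 + t)%N; first by rewrite ltn_add2l.
  by rewrite /xx ltnNge leq_addr /= addKn.
Qed.

Variables (l : nat) (K : 'I_l -> set (X -> R)) (S : set (X -> R)).
Hypothesis Kcomp : forall j, compact (K j : set {ptws X -> R}).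
Hypothesis Hsep : forall (mu : 'I_l -> R) (phi : 'I_l -> X -> R),
  (forall j, 0 <= mu j) -> \sum_j mu j = 1 -> (forall j, K j (phi j)) ->
  ~ closure (cone S : set {ptws X -> R}) (fun x => \sum_j mu j * phi j x).

Definition Good (i : Itype) (w : ('I_l -> R) * ('I_l -> X -> R) * (X -> R)) :=
  [/\ forall j, 0 <= w.1.1 j, \sum_j w.1.1 j = 1, forall j, K j (w.1.2 j),
      cone S w.2 &
      \sum_(t < i.1.1) `|\sum_j w.1.1 j * w.1.2 j (i.1.2 t) - w.2 (i.1.2 t)| < i.2].

Lemma stepA : exists N (x : nat -> X) (eps : R), 0 < eps /\
  forall mu phi psi, (forall j, 0 <= mu j) -> \sum_j mu j = 1 ->
    (forall j, K j (phi j)) -> cone S psi ->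
    eps <= \sum_(t < N) `|\sum_j mu j * phi j (x t) - psi (x t)|.
Proof.
apply: contrapT => Hn.
have Hi : forall i : Itype, exists w, 0 < i.2 -> Good i w.
  move=> [[N x] e]; have [e0|ne0] := pselect (0 < e); last first.
    by exists ((fun _ => 0), (fun _ _ => 0), (fun _ => 0)).
  apply: contrapT => nw; apply: Hn; exists N, x, e; split => // mu phi psi h1 h2 h3 h4.
  rewrite leNgt; apply/negP => lt; apply: nw; exists (mu, phi, psi) => _; split => //.
have [w Hw] := choice Hi.
have [U [UU F0U]] := ultraFilterLemma F0_proper.
have PU : ProperFilter U by exact: ultra_proper.
have FU : Filter U by exact: PU.
have UD : U [set i : Itype | 0 < i.2].
  apply: F0U; exists ((0%N, fun _ => 0), 1) => //= k [] //.
have UG : U [set i | Good i (w i)].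
  by apply: filterS UD => i /Hw.
have Upt : forall (t : X) (d : R), 0 < d -> U [set i : Itype | [/\ 0 < i.2, i.2 <= d &
      exists2 t', (t' < i.1.1)%N & i.1.2 t' = t]].
  move=> t d d0; apply: F0U; exists ((1%N, fun _ => t), d) => //= k [k0 kd hk]; split => //.
  by have [t' t'k et] := hk 0%N isT; exists t'.
have Hphi : forall j, exists p, K j p /\
    ((fun i => ((w i).1.2 j : {ptws X -> R})) @ U --> (p : {ptws X -> R})).
  move=> j; have UFj := ultra_fmap (fun i => ((w i).1.2 j : {ptws X -> R})) UU.
  have hK : ((fun i => ((w i).1.2 j : {ptws X -> R})) @ U) (K j).
    have : U [set i | K j ((w i).1.2 j)].
      by apply: filterS UG => i [_ _ hK _ _]; exact: hK.
    exact.
  have := @Kcomp j; rewrite compact_ultra /= => /(_ _ UFj hK) [p [Kp cvp]].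
  by exists p.
have [phis Hphis] := choice Hphi.
have Hmu : forall j, exists m : R, 0 <= m /\ ((fun i => (w i).1.1 j) @ U --> m).
  move=> j; have UFj := ultra_fmap (fun i => (w i).1.1 j) UU.
  have hK : ((fun i => (w i).1.1 j) @ U) [set x : R | x \in `[(0:R), 1]].
    have : U [set i | (w i).1.1 j \in `[(0:R), 1]].
      apply: filterS UG => i [h0 h1 _ _ _] /=; rewrite in_itv /= h0 /= -h1.
      rewrite (bigD1 j) //= lerDl; exact: sumr_ge0.
    exact.
  have := @segment_compact R 0 1; rewrite compact_ultra /= => /(_ _ UFj hK) [m [+ cvm]].
  by rewrite /= in_itv /= => /andP [m0 _]; exists m.
have [mus Hmus] := choice Hmu.
pose Gam := fun i x => \sum_j (w i).1.1 j * (w i).1.2 j x.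
pose Gs := fun x => \sum_j mus j * phis j x.
have cvGam : forall t, (fun i => Gam i t) @ U --> Gs t.
  move=> t; apply: cvg_sumR => j; apply: cvgM; first exact: (Hmus j).2.
  exact: (ptws_cvg_at (Hphis j).2).
have sum1 : \sum_j mus j = 1.
  have cvs : (fun i => \sum_j (w i).1.1 j) @ U --> \sum_j mus j.
    by apply: cvg_sumR => j; exact: (Hmus j).2.
  apply/eqP; rewrite -subr_eq0; apply/eqP; apply: abs_small => e e0.
  have nr := (@cvgR_lt R _ U FU _ _).1 cvs e e0.
  have [i [hi [_ gi _ _ _]]] := filter_ex (filterI nr UG).
  by move: hi; rewrite gi.
have cl : closure (cone S : set {ptws X -> R}) Gs.
  move=> B nB.
  have cvpsi : (fun i => ((w i).2 : {ptws X -> R})) @ U --> (Gs : {ptws X -> R}).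
    apply: ptws_cvg_of => t; apply/cvgR_lt => e e0.
    have e20 : 0 < e / 2 by apply: divr_gt0.
    have n1 := (@cvgR_lt R _ U FU _ _).1 (cvGam t) (e / 2) e20.
    have n2 := Upt t (e / 2) e20.
    apply: filterS (filterI n1 (filterI n2 UG)) => i [h1 [[i0 ie [t' t'N xt']] [_ _ _ _ hsum]]].
    have h2 : `|Gam i t - (w i).2 t| < e / 2.
      rewrite -xt'; apply: le_lt_trans (lt_le_trans hsum ie).
      apply: (term_le_sum (G := fun s => `|Gam i (i.1.2 s) - (w i).2 (i.1.2 s)|)) => //.
    move: h1 h2; rewrite !ltr_norml => /andP [a1 a2] /andP [b1 b2].
    apply/andP; split; lra.
  have UB : U [set i | B (w i).2] := cvpsi B nB.
  have [i [Bi Gi]] := filter_ex (filterI UB UG).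
  by exists (w i).2; split => //; case: Gi.
exact: (@Hsep mus phis (fun j => (Hmus j).1) sum1 (fun j => (Hphis j).1) cl).
Qed.

End StepA.


Section Sep.
Variables (R : realType) (X : normedModType R).

Lemma separation l (K : 'I_l -> set (X -> R)) (S : set (X -> R)) :
  (forall j, K j !=set0) -> (forall j, Defs.convex_set (K j)) ->
  (forall j, compact (K j : set {ptws X -> R})) ->
  (forall j phi, K j phi -> lin phi) -> (forall psi, S psi -> lin psi) ->
  (forall (mu : 'I_l -> R) (phi : 'I_l -> X -> R),
    (forall j, 0 <= mu j) -> \sum_j mu j = 1 -> (forall j, K j (phi j)) ->
    ~ closure (cone S : set {ptws X -> R}) (fun x => \sum_j mu j * phi j x)) ->
  exists (v : X) (eps : R), [/\ 0 < eps, forall j phi, K j phi -> phi v <= - eps &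
    forall psi, S psi -> 0 <= psi v].
Proof.
move=> Kne Kcv Kcp Klin Slin Hsep.
have [N [x [eps [e0 HA]]]] := stepA Kcp Hsep.
pose nrm := fun z : 'I_N -> R => \sum_t `|z t|.
pose E := fun (w : 'I_N -> R) (mu : R) => exists n (c : 'I_n -> R) (a : 'I_n -> X -> R) psi,
   [/\ forall k, 0 <= c k, forall k, exists j, K j (a k), cone S psi, mu = \sum_k c k &
       w = fun t => \sum_k c k * a k (x t) - psi (x t)].
have nrm0 : nrm (fun _ => 0) = 0 by rewrite /nrm big1 // => t _; rewrite normr0.
have nrm_ge0 z : 0 <= nrm z by apply: sumr_ge0 => t _.
have Elb w mu : E w mu -> mu * eps <= nrm w.
  move=> [n [c [a [psi [cp aK Spsi emu ->]]]]]; rewrite {}emu; clear mu.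
  set mu := \sum_k c k.
  have mu0 : 0 <= mu by apply: sumr_ge0.
  have [mupos|mu00] := ltrP 0 mu; last first.
    have -> : mu = 0 by apply/eqP; rewrite eq_le mu00 mu0.
    by rewrite mul0r.
  have [nu [phi [nup nus phiK phis]]] := grouping Kne Kcv (c := fun k => c k / mu) (a := a)
     (fun k => divr_ge0 (cp k) mu0) aK.
  have mui0 : 0 <= mu^-1 by rewrite invr_ge0.
  have nu1 : \sum_j nu j = 1 by rewrite nus -mulr_suml -/mu divff // gt_eqF.
  have := HA nu phi (fun y => mu^-1 * psi y) nup nu1 phiK (cone_scale mui0 Spsi).
  have -> : \sum_(t < N) `|\sum_j nu j * phi j (x t) - mu^-1 * psi (x t)| =
     mu^-1 * nrm (fun t => \sum_k c k * a k (x t) - psi (x t)).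
    rewrite /nrm mulr_sumr; apply: eq_bigr => t _.
    have -> : \sum_j nu j * phi j (x t) - mu^-1 * psi (x t) =
        mu^-1 * (\sum_k c k * a k (x t) - psi (x t)).
      rewrite -phis mulrBr mulr_sumr; congr (_ - _); apply: eq_bigr => k _.
      by rewrite mulrA [mu^-1 * _]mulrC.
    by rewrite normrM (ger0_norm mui0).
  move=> h; have := ler_wpM2l mu0 h; rewrite mulrA mulfV ?gt_eqF // mul1r; exact.
have E0 : E (fun _ => 0) 0.
  exists 0%N, (fun _ => 0), (fun _ _ => 0), (fun _ => 0); split => //; try by case.
  - exact: cone0.
  - by rewrite big_ord0.
  - by apply/funext => t; rewrite big_ord0 subr0.
have Eadd w1 m1 w2 m2 : E w1 m1 -> E w2 m2 -> E (fun t => w1 t + w2 t) (m1 + m2).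
  move=> [n1 [c1 [a1 [psi1 [cp1 aK1 S1 -> ->]]]]] [n2 [c2 [a2 [psi2 [cp2 aK2 S2 -> ->]]]]].
  exists (n1 + n2)%N, (catf c1 c2), (catf a1 a2), (fun y => psi1 y + psi2 y); split.
  - exact: (catfP (P := fun r => 0 <= r)).
  - exact: (catfP (P := fun b => exists j, K j b)).
  - exact: cone_add.
  - by rewrite big_split_ord /=; congr (_ + _); apply: eq_bigr => i _; rewrite ?catfl ?catfr.
  - apply/funext => t; rewrite big_split_ord /=.
    have -> : \sum_(i < n1) catf c1 c2 (lshift n2 i) * catf a1 a2 (lshift n2 i) (x t) =
              \sum_(i < n1) c1 i * a1 i (x t) by apply: eq_bigr => i _; rewrite !catfl.
    have -> : \sum_(i < n2) catf c1 c2 (rshift n1 i) * catf a1 a2 (rshift n1 i) (x t) =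
              \sum_(i < n2) c2 i * a2 i (x t) by apply: eq_bigr => i _; rewrite !catfr.
    ring.
have Esc s w m : 0 < s -> E w m -> E (fun t => s * w t) (s * m).
  move=> s0 [n [c [a [psi [cp aK Sp -> ->]]]]].
  exists n, (fun k => s * c k), a, (fun y => s * psi y); split => //.
  - by move=> k; apply: mulr_ge0 => //; apply: ltW.
  - by apply: cone_scale => //; apply: ltW.
  - by rewrite mulr_sumr.
  - apply/funext => t; rewrite mulrBr mulr_sumr; congr (_ - _).
    by apply: eq_bigr => k _; rewrite mulrA.
have Ephi j phi : K j phi -> E (fun t => phi (x t)) 1.
  move=> Kp; exists 1%N, (fun _ => 1), (fun _ => phi), (fun _ => 0); split => //.
  - by move=> k; exists j.
  - exact: cone0.
  - by rewrite big_ord1.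
  - by apply/funext => t; rewrite big_ord1 mul1r subr0.
have Epsi psi : S psi -> E (fun t => - psi (x t)) 0.
  move=> Sp; exists 0%N, (fun _ => 0), (fun _ _ => 0), psi; split => //; try by case.
  - exact: cone_sub.
  - by rewrite big_ord0.
  - by apply/funext => t; rewrite big_ord0 sub0r.
pose Pset := fun z : 'I_N -> R =>
  [set r | exists w mu, E w mu /\ r = nrm (fun t => z t + w t) - mu * eps].
pose p := fun z => inf (Pset z).
have nrmD z1 z2 : nrm (fun t => z1 t + z2 t) <= nrm z1 + nrm z2.
  by rewrite /nrm -big_split /=; apply: ler_sum => t _; exact: ler_normD.
have lbP z r : Pset z r -> - nrm z <= r.
  move=> [w [mu [Ew ->]]]; have := Elb _ _ Ew.
  have : nrm w <= nrm (fun t => z t + w t) + nrm (fun t => - z t).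
    apply: le_trans (nrmD _ _); rewrite /nrm; apply: ler_sum => t _.
    by rewrite addrC addrA addNr add0r.
  have -> : nrm (fun t => - z t) = nrm z by rewrite /nrm; apply: eq_bigr => t _; rewrite normrN.
  lra.
have Pne z : Pset z !=set0 by exists (nrm (fun t => z t + 0) - 0 * eps), (fun _ => 0), 0.
have hlb z : has_lbound (Pset z) by exists (- nrm z) => r; exact: lbP.
have p_le z r : Pset z r -> p z <= r by move=> h; exact: ge_inf (hlb z) _ h.
have p_ge z b : (forall r, Pset z r -> b <= r) -> b <= p z.
  by move=> h; apply: lb_le_inf (Pne z) _ => r; exact: h.
have padd z1 z2 : p (fun t => z1 t + z2 t) <= p z1 + p z2.
  have key r1 r2 : Pset z1 r1 -> Pset z2 r2 -> p (fun t => z1 t + z2 t) <= r1 + r2.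
    move=> [w1 [m1 [E1 ->]]] [w2 [m2 [E2 ->]]].
    apply: le_trans (p_le _ (nrm (fun t => (z1 t + z2 t) + (w1 t + w2 t)) - (m1 + m2) * eps) _) _.
      by exists (fun t => w1 t + w2 t), (m1 + m2); split => //; exact: Eadd.
    have : nrm (fun t => z1 t + z2 t + (w1 t + w2 t)) <=
           nrm (fun t => z1 t + w1 t) + nrm (fun t => z2 t + w2 t).
      apply: le_trans (nrmD _ _); rewrite /nrm; apply: ler_sum => t _.
      by rewrite addrACA.
    lra.
  have h1 r2 : Pset z2 r2 -> p (fun t => z1 t + z2 t) - r2 <= p z1.
    by move=> h2; apply: p_ge => r1 h1; have := key _ _ h1 h2; lra.
  have : p (fun t => z1 t + z2 t) - p z1 <= p z2.
    by apply: p_ge => r2 h2; have := h1 _ h2; lra.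
  lra.
have phom s z : 0 < s -> s * p z <= p (fun t => s * z t).
  move=> s0; apply: p_ge => r [w [mu [Ew ->]]].
  have si0 : 0 < s^-1 by rewrite invr_gt0.
  have hm : Pset z (nrm (fun t => z t + s^-1 * w t) - s^-1 * mu * eps).
    by exists (fun t => s^-1 * w t), (s^-1 * mu); split => //; exact: Esc.
  have h := p_le _ _ hm.
  have -> : nrm (fun t => s * z t + w t) = s * nrm (fun t => z t + s^-1 * w t).
    rewrite /nrm mulr_sumr; apply: eq_bigr => t _.
    rewrite -(gtr0_norm s0) -normrM (gtr0_norm s0) mulrDr mulrA mulfV ?gt_eqF // mul1r //.
  suff : s * p z <= s * (nrm (fun t => z t + s^-1 * w t) - s^-1 * mu * eps).
    by rewrite mulrBr !mulrA mulfV ?gt_eqF // mul1r.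
  by rewrite ler_pM2l.
have p0 : 0 <= p (fun _ => 0).
  by apply: p_ge => r /lbP; rewrite nrm0 oppr0.
have [a Ha] := HB_coord padd phom p0.
exists (- \sum_t a t *: x t), eps; split => //.
- move=> j phi Kp; rewrite (linN _ (Klin _ _ Kp)) (lin_sum _ _ (Klin _ _ Kp)).
  have := Ha (fun t => - phi (x t)).
  have : p (fun t => - phi (x t)) <= nrm (fun t => - phi (x t) + phi (x t)) - 1 * eps.
    by apply: p_le; exists (fun t => phi (x t)), 1; split => //; exact: Ephi Kp.
  have -> : nrm (fun t => - phi (x t) + phi (x t)) = 0.
    by rewrite /nrm big1 // => t _; rewrite addNr normr0.
  have -> : \sum_t a t * - phi (x t) = - \sum_t a t * phi (x t).
    by rewrite -sumrN; apply: eq_bigr => t _; rewrite mulrN.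
  lra.
- move=> psi Sp; rewrite (linN _ (Slin _ Sp)) (lin_sum _ _ (Slin _ Sp)).
  have := Ha (fun t => psi (x t)).
  have : p (fun t => psi (x t)) <= nrm (fun t => psi (x t) + - psi (x t)) - 0 * eps.
    by apply: p_le; exists (fun t => - psi (x t)), 0; split => //; exact: Epsi.
  have -> : nrm (fun t => psi (x t) + - psi (x t)) = 0.
    by rewrite /nrm big1 // => t _; rewrite addrN normr0.
  lra.
Qed.

End Sep.


Section Sets.
Variables (R : realType) (X : normedModType R).

Lemma in_dual_lc (f g : X -> R) (a b : R) :
  in_dual f -> in_dual g -> in_dual (fun x => a * f x + b * g x).
Proof.
move=> [lf cf] [lg cg]; split.
  by move=> s x y; rewrite lf lg; ring.
move=> x.
have h1 : {for x, continuous (fun y => a * f y)}.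
  by apply: continuousM; [exact: cst_continuous|exact: cf].
have h2 : {for x, continuous (fun y => b * g y)}.
  by apply: continuousM; [exact: cst_continuous|exact: cg].
exact: (continuousD h1 h2).
Qed.

Lemma in_dual0 : in_dual (fun _ : X => 0 : R).
Proof. by split => [s x y|x]; [ring|exact: cst_continuous]. Qed.

Lemma in_dual_sum l (mu : 'I_l -> R) (phi : 'I_l -> X -> R) :
  (forall j, in_dual (phi j)) -> in_dual (fun x => \sum_j mu j * phi j x).
Proof.
elim: l mu phi => [|l IH] mu phi h.
  have -> : (fun x => \sum_(j < 0) mu j * phi j x) = (fun _ => 0).
    by apply/funext => x; rewrite big_ord0.
  exact: in_dual0.
have -> : (fun x => \sum_(j < l.+1) mu j * phi j x) =
   (fun x => 1 * (\sum_(j < l) mu (widen_ord (leqnSn l) j) * phi (widen_ord (leqnSn l) j) x)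
             + mu ord_max * phi ord_max x).
  by apply/funext => x; rewrite big_ord_recr /= mul1r.
apply: in_dual_lc => //; exact: IH.
Qed.

Lemma shift_in_dual D (y : X -> R) : D `<=` @in_dual R X -> in_dual y -> shift_set D y `<=` @in_dual R X.
Proof.
move=> hD hy psi [phi Dphi ->].
have := in_dual_lc 1 1 (hD _ Dphi) hy.
by have -> : (fun x => 1 * phi x + 1 * y x) = (fun x => phi x + y x)
  by apply/funext => x; rewrite !mul1r.
Qed.

Lemma negshift_in_dual (x0 : X -> R) D : in_dual x0 -> D `<=` @in_dual R X ->
  negshift_set x0 D `<=` @in_dual R X.
Proof.
move=> hx hD psi [phi Dphi ->].
have := in_dual_lc (-1) (-1) hx (hD _ Dphi).
by have -> : (fun x => -1 * x0 x + -1 * phi x) = (fun x => - x0 x - phi x)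
  by apply/funext => x; rewrite !mulN1r.
Qed.

Lemma shift_convex D (y : X -> R) : Defs.convex_set D -> Defs.convex_set (shift_set D y).
Proof.
move=> cD phi psi t t01 [phi' D1 ->] [psi' D2 ->].
exists (fun x => t * phi' x + (1 - t) * psi' x); first exact: cD.
by apply/funext => x; ring.
Qed.

Lemma negshift_convex (x0 : X -> R) D : Defs.convex_set D -> Defs.convex_set (negshift_set x0 D).
Proof.
move=> cD phi psi t t01 [phi' D1 ->] [psi' D2 ->].
exists (fun x => t * phi' x + (1 - t) * psi' x); first exact: cD.
by apply/funext => x; ring.
Qed.

Lemma shift_ne D (y : X -> R) : D !=set0 -> shift_set D y !=set0.
Proof. by move=> [phi Dphi]; exists (fun x => phi x + y x), phi. Qed.

Lemma negshift_ne (x0 : X -> R) D : D !=set0 -> negshift_set x0 D !=set0.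
Proof. by move=> [phi Dphi]; exists (fun x => - x0 x - phi x), phi. Qed.

Lemma map_compact (D : set (X -> R)) (F : (X -> R) -> (X -> R)) :
  (forall t (f : {ptws X -> R}), (fun g : {ptws X -> R} => F g t) @ nbhs f --> F f t) ->
  compact (D : set {ptws X -> R}) ->
  compact ([set psi | exists2 phi, D phi & psi = F phi] : set {ptws X -> R}).
Proof.
move=> hF cD.
have cont : continuous (fun g : {ptws X -> R} => (F g : {ptws X -> R})).
  by move=> f; apply: (ptws_cvg_of (FF := nbhs_filter f)) => t; exact: hF.
have := continuous_compact (continuous_subspaceT cont) cD.
have -> : [set (F g : {ptws X -> R}) | g in (D : set {ptws X -> R})] =
    [set psi | exists2 phi, D phi & psi = F phi].
  by apply/seteqP; split => psi [phi Dphi e]; exists phi.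
done.
Qed.

Lemma shift_compact D (y : X -> R) : compact (D : set {ptws X -> R}) ->
  compact (shift_set D y : set {ptws X -> R}).
Proof.
apply: (map_compact (F := fun g x => g x + y x)) => t f.
exact: (@cvgD _ _ _ (nbhs f) (nbhs_filter f) (fun g : {ptws X -> R} => g t) (fun _ => y t) _ _
  (@eval_continuous R X t f) (@cvg_cst _ (y t) _ (nbhs f) (nbhs_filter f))).
Qed.

Lemma negshift_compact (x0 : X -> R) D : compact (D : set {ptws X -> R}) ->
  compact (negshift_set x0 D : set {ptws X -> R}).
Proof.
apply: (map_compact (F := fun g x => - x0 x - g x)) => t f.
exact: (@cvgB _ _ _ (nbhs f) (nbhs_filter f) (fun _ => - x0 t) (fun g : {ptws X -> R} => g t) _ _
  (@cvg_cst _ (- x0 t) _ (nbhs f) (nbhs_filter f)) (@eval_continuous R X t f)).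
Qed.

Lemma compact_ub C (v : X) : compact (C : set {ptws X -> R}) ->
  has_ubound [set psi v | psi in C].
Proof.
move=> /(compact_eval_bound v) [M HM]; exists M => r [psi Cpsi <-].
exact: le_trans (ler_norm _) (HM _ Cpsi).
Qed.

Lemma supp_ub C (v : X) psi : has_ubound [set psi v | psi in C] -> C psi -> psi v <= supp C v.
Proof. by move=> h Cpsi; apply: ub_le_sup => //; exists psi. Qed.

Lemma supp_le C (v : X) (b : R) : C !=set0 -> (forall psi, C psi -> psi v <= b) -> supp C v <= b.
Proof.
move=> [phi Cphi] h; apply: ge_sup; first by exists (phi v), phi.
by move=> r [psi Cpsi <-]; exact: h.
Qed.

Lemma lin_opp (f : X -> R) : lin (fun x => - f x) -> lin f.
Proof. by move=> h s x y; have := h s x y; move=> e; apply: oppr_inj; rewrite e; ring. Qed.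

End Sets.


Lemma opp_mem (R : realType) (X : normedModType R) (C : set (X -> R)) psi :
  C psi -> opp_set C (fun x => - psi x).
Proof.
by move=> h; rewrite /opp_set /=; have -> : (fun x => - - psi x) = psi by apply/funext => x; rewrite opprK.
Qed.

Unset Implicit Arguments. Set Strict Implicit.

Theorem proposition1 (R : realType) (X : completeNormedModType R) (m l : nat)
  (f : 'I_m -> X -> R) (g : 'I_l -> X -> R) (xbar : X)
  (dlf duf : 'I_m -> set (X -> R)) (dlg dug : 'I_l -> set (X -> R))
  (xs ys : 'I_m -> X -> R) (zs : 'I_l -> X -> R) :
  (forall i, f i xbar = 0) -> (forall j, g j xbar <= 0) ->
  (forall i, quasidiff (f i) xbar (dlf i) (duf i)) ->
  (forall j, g j xbar = 0 -> quasidiff (g j) xbar (dlg j) (dug j)) ->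
  (forall i, dlf i (xs i)) -> (forall i, duf i (ys i)) ->
  (forall j, g j xbar = 0 -> dug j (zs j)) ->
  [/\ (forall i, exists v : X,
          supp (shift_set (dlf i) (ys i)) v < 0 /\
          (forall k, k != i ->
             supp (shift_set (dlf k) (ys k)) v <= 0 /\
             supp (negshift_set (xs k) (duf k)) v <= 0)),
      (forall i, exists w : X,
          supp (negshift_set (xs i) (duf i)) w < 0 /\
          (forall k, k != i ->
             supp (negshift_set (xs k) (duf k)) w <= 0 /\
             supp (shift_set (dlf k) (ys k)) w <= 0)) &
      (exists v0 : X,
          (forall j, g j xbar = 0 -> supp (shift_set (dlg j) (zs j)) v0 < 0) /\
          (forall i, supp (shift_set (dlf i) (ys i)) v0 <= 0 /\
                     supp (negshift_set (xs i) (duf i)) v0 <= 0))]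
  <->
  ((forall i,
      (shift_set (dlf i) (ys i) `|` negshift_set (xs i) (duf i)) `&`
      wstar_closure (cone (\bigcup_(k in [set k | k != i])
          opp_set (shift_set (dlf k) (ys k) `|` negshift_set (xs k) (duf k))))
      = set0) /\
   co (\bigcup_(j in [set j | g j xbar = 0]) shift_set (dlg j) (zs j)) `&`
   wstar_closure (cone (\bigcup_(i in [set: 'I_m])
       opp_set (shift_set (dlf i) (ys i) `|` negshift_set (xs i) (duf i))))
   = set0).
Proof.
move=> hf hg qf qg hx hy hz.
have dA i : shift_set (dlf i) (ys i) `<=` @in_dual R X.
  case: (qf i) => _ _ [_ [hD _]] [_ [hU _]] _; exact: (shift_in_dual hD (hU _ (hy i))).
have dB i : negshift_set (xs i) (duf i) `<=` @in_dual R X.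
  case: (qf i) => _ _ [_ [hD _]] [_ [hU _]] _; exact: (negshift_in_dual (hD _ (hx i)) hU).
have cA i : compact (shift_set (dlf i) (ys i) : set {ptws X -> R}).
  case: (qf i) => _ _ [_ [_ hD]] [_ [_ hU]] _; exact: shift_compact.
have cB i : compact (negshift_set (xs i) (duf i) : set {ptws X -> R}).
  case: (qf i) => _ _ [_ [_ hD]] [_ [_ hU]] _; exact: negshift_compact.
have vA i : Defs.convex_set (shift_set (dlf i) (ys i)).
  case: (qf i) => _ _ [hD _] [hU _] _; exact: shift_convex.
have vB i : Defs.convex_set (negshift_set (xs i) (duf i)).
  case: (qf i) => _ _ [hD _] [hU _] _; exact: negshift_convex.
have nA i : shift_set (dlf i) (ys i) !=set0.
  case: (qf i) => hD hU _ _ _; exact: shift_ne.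
have nB i : negshift_set (xs i) (duf i) !=set0.
  case: (qf i) => hD hU _ _ _; exact: negshift_ne.
have dG j : g j xbar = 0 -> shift_set (dlg j) (zs j) `<=` @in_dual R X.
  move=> hj; case: (qg j hj) => _ _ [_ [hD _]] [_ [hU _]] _.
  exact: (shift_in_dual hD (hU _ (hz j hj))).
have cG j : g j xbar = 0 -> compact (shift_set (dlg j) (zs j) : set {ptws X -> R}).
  move=> hj; case: (qg j hj) => _ _ [_ [_ hD]] [_ [_ hU]] _; exact: shift_compact.
have vG j : g j xbar = 0 -> Defs.convex_set (shift_set (dlg j) (zs j)).
  move=> hj; case: (qg j hj) => _ _ [hD _] [hU _] _; exact: shift_convex.
have nG j : g j xbar = 0 -> shift_set (dlg j) (zs j) !=set0.
  move=> hj; case: (qg j hj) => hD hU _ _ _; exact: shift_ne.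
have uA i v := compact_ub v (cA i).
have uB i v := compact_ub v (cB i).
split.
- move=> [H1 H2 H3]; split.
  + move=> i; rewrite -subset0 => phi [Cphi [_ clphi]].
    have Sge v : (forall k, k != i ->
        supp (shift_set (dlf k) (ys k)) v <= 0 /\ supp (negshift_set (xs k) (duf k)) v <= 0) ->
        0 <= phi v.
      move=> h; apply: (closure_ge0 clphi) => chi; apply: cone_ge0.
      move=> psi [k /= ki [hA|hB]].
      * have := supp_ub (uA k v) hA; have := (h k ki).1; lra.
      * have := supp_ub (uB k v) hB; have := (h k ki).2; lra.
    case: Cphi => [hA|hB].
    * have [v [hv hk]] := H1 i.
      have := supp_ub (uA i v) hA; have := Sge v hk; lra.
    * have [v [hv hk]] := H2 i.
      have := supp_ub (uB i v) hB.
      have := Sge v (fun k ki => let: conj a b := hk k ki in conj b a); lra.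
  + rewrite -subset0 => phi [[n [c [a [cp c1 aG ->]]]] [_ clphi]].
    have [v0 [hG hC]] := H3.
    have ge0 : 0 <= \sum_k c k * a k v0.
      apply: (closure_ge0 clphi) => chi; apply: cone_ge0.
      move=> psi [k _ [hA|hB]].
      * have := supp_ub (uA k v0) hA; have := (hC k).1; lra.
      * have := supp_ub (uB k v0) hB; have := (hC k).2; lra.
    have neg k : a k v0 < 0.
      have [j hj Gj] := aG k.
      have := supp_ub (compact_ub v0 (cG j hj)) Gj; have := hG j hj; lra.
    have [k0 ck0] : exists k0, 0 < c k0.
      apply: contrapT => hn.
      have : \sum_k c k = 0.
        apply: big1 => k _; apply/eqP; rewrite eq_le cp andbT.
        by rewrite leNgt; apply/negP => h; apply: hn; exists k.
      by rewrite c1 => /eqP; rewrite oner_eq0.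
    have : \sum_k c k * a k v0 <= c k0 * a k0 v0.
      rewrite (bigD1 k0) //= gerDl; apply: sumr_le0 => k _.
      by apply: mulr_ge0_le0 => //; apply: ltW.
    have : c k0 * a k0 v0 < 0 by rewrite pmulr_rlt0.
    lra.
- move=> [H1 H2].
  have Smem (P : set 'I_m) k psi : P k ->
      (shift_set (dlf k) (ys k) psi \/ negshift_set (xs k) (duf k) psi) ->
      (\bigcup_(k in P) opp_set (shift_set (dlf k) (ys k) `|` negshift_set (xs k) (duf k)))
        (fun x => - psi x).
    by move=> Pk h; exists k => //; apply: opp_mem.
  have Slin (P : set 'I_m) psi :
      (\bigcup_(k in P) opp_set (shift_set (dlf k) (ys k) `|` negshift_set (xs k) (duf k))) psi ->
      lin psi.
    move=> [k _ [hA|hB]]; apply: lin_opp.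
    * exact: (dA k _ hA).1.
    * exact: (dB k _ hB).1.
  have Sle (P : set 'I_m) (v : X) k : P k ->
      (forall psi, (\bigcup_(k in P) opp_set (shift_set (dlf k) (ys k) `|`
          negshift_set (xs k) (duf k))) psi -> 0 <= psi v) ->
      supp (shift_set (dlf k) (ys k)) v <= 0 /\ supp (negshift_set (xs k) (duf k)) v <= 0.
    move=> Pk h; split.
    * apply: supp_le; first exact: nA.
      move=> psi hp; have := h _ (Smem P k psi Pk (or_introl hp)); lra.
    * apply: supp_le; first exact: nB.
      move=> psi hp; have := h _ (Smem P k psi Pk (or_intror hp)); lra.
  have H1' i (phi : X -> R) : (shift_set (dlf i) (ys i) phi \/ negshift_set (xs i) (duf i) phi) ->
      ~ closure (cone (\bigcup_(k in [set k | k != i])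
          opp_set (shift_set (dlf k) (ys k) `|` negshift_set (xs k) (duf k))) : set {ptws X -> R}) phi.
    move=> hphi cl.
    have : ((shift_set (dlf i) (ys i) `|` negshift_set (xs i) (duf i)) `&`
      wstar_closure (cone (\bigcup_(k in [set k | k != i])
          opp_set (shift_set (dlf k) (ys k) `|` negshift_set (xs k) (duf k))))) phi.
      split => //; split => //.
      by case: hphi => h; [exact: dA h|exact: dB h].
    by rewrite (H1 i).
  have one (mu : 'I_1 -> R) (phi : 'I_1 -> X -> R) : \sum_j mu j = 1 ->
      (fun x => \sum_j mu j * phi j x) = phi ord0.
    by move=> h; apply/funext => x; move: h; rewrite !big_ord1 => ->; rewrite mul1r.
  split.
  + move=> i.
    have := @separation R X 1 (fun _ => shift_set (dlf i) (ys i)) _ (fun _ => nA i) (fun _ => vA i)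
      (fun _ => cA i) (fun _ phi h => (dA i phi h).1) (Slin _)
      (fun mu phi _ mu1 phiK => ltac:(rewrite (one _ _ mu1); apply: H1'; left; exact: phiK)).
    move=> [v [eps [e0 hK hS]]]; exists v; split.
    * apply: (@le_lt_trans _ _ (- eps)); last by rewrite oppr_lt0.
      by apply: supp_le => //; exact: (hK ord0).
    * move=> k ki; exact: (Sle _ v k ki hS).
  + move=> i.
    have := @separation R X 1 (fun _ => negshift_set (xs i) (duf i)) _ (fun _ => nB i) (fun _ => vB i)
      (fun _ => cB i) (fun _ phi h => (dB i phi h).1) (Slin _)
      (fun mu phi _ mu1 phiK => ltac:(rewrite (one _ _ mu1); apply: H1'; right; exact: phiK)).
    move=> [v [eps [e0 hK hS]]]; exists v; split.
    * apply: (@le_lt_trans _ _ (- eps)); last by rewrite oppr_lt0.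
      by apply: supp_le => //; exact: (hK ord0).
    * move=> k ki; have [h1 h2] := Sle _ v k ki hS; split => //.
  + case: (pselect (exists j0, g j0 xbar = 0)) => [[j0 hj0]|none]; last first.
      exists 0; split.
      * by move=> j hj; exfalso; apply: none; exists j.
      * move=> i; split.
        -- apply: supp_le; first exact: nA.
           by move=> psi hp; rewrite (lin0 (dA i _ hp).1).
        -- apply: supp_le; first exact: nB.
           by move=> psi hp; rewrite (lin0 (dB i _ hp).1).
    pose K' := fun j => if g j xbar == 0 then shift_set (dlg j) (zs j) else shift_set (dlg j0) (zs j0).
    have K'act j : exists2 j', g j' xbar = 0 & K' j = shift_set (dlg j') (zs j').
      rewrite /K'; case: eqP => h; [by exists j|by exists j0].
    have Hsep3 : forall (mu : 'I_l -> R) (phi : 'I_l -> X -> R),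
        (forall j, 0 <= mu j) -> \sum_j mu j = 1 -> (forall j, K' j (phi j)) ->
        ~ closure (cone (\bigcup_(i in [set: 'I_m])
            opp_set (shift_set (dlf i) (ys i) `|` negshift_set (xs i) (duf i))) : set {ptws X -> R})
          (fun x => \sum_j mu j * phi j x).
      move=> mu phi mu0 mu1 phiK cl.
      have : (co (\bigcup_(j in [set j | g j xbar = 0]) shift_set (dlg j) (zs j)) `&`
        wstar_closure (cone (\bigcup_(i in [set: 'I_m])
          opp_set (shift_set (dlf i) (ys i) `|` negshift_set (xs i) (duf i)))))
          (fun x => \sum_j mu j * phi j x).
        split.
          exists l, mu, phi; split => // k.
          by have [j' h e] := K'act k; exists j' => //; rewrite -e.
        split => //; apply: in_dual_sum => j.
        by have [j' h e] := K'act j; apply: (dG j' h); rewrite -e.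
      by rewrite H2.
    have := @separation R X l K' _
      (fun j => let: ex_intro2 j' h e := K'act j in ltac:(rewrite e; exact: nG j' h))
      (fun j => let: ex_intro2 j' h e := K'act j in ltac:(rewrite e; exact: vG j' h))
      (fun j => let: ex_intro2 j' h e := K'act j in ltac:(rewrite e; exact: cG j' h))
      (fun j phi hp => let: ex_intro2 j' h e := K'act j in
          ltac:(rewrite e in hp; exact: (dG j' h _ hp).1))
      (Slin _) Hsep3.
    move=> [v [eps [e0 hK hS]]]; exists v; split.
    * move=> j hj; apply: (@le_lt_trans _ _ (- eps)); last by rewrite oppr_lt0.
      apply: supp_le; first exact: nG.
      move=> psi hp; apply: (hK j); rewrite /K'; case: eqP => // ->.
    * move=> i; exact: (Sle _ v i I hS).
Qed.
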